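(* The only novel partition of length $5$ is $(2,1,1,1,1)$.
   Context: An integer partition is $\lambda=(\lambda_1,\dots,\lambda_k)$ with integers $\lambda_1\ge\dots\ge\lambda_k\ge 1$; $k$ is its length. For $v\in\mathbb{Z}^k$ let $v^{\perp B}=\{x\in\{-1,1\}^k: v\cdot x=0\}$; $\lambda^{\perp B}$ is this set for $(\lambda_1,\dots,\lambda_k)$. $V_\lambda\subset\mathbb{Z}^k$ is the set of vectors obtained from $(\lambda_1,\dots,\lambda_k)$ by permuting coordinates and changing signs of some coordinates, with first coordinate positive. For $I\subset\{1,\dots,m\}$, $\mathrm{Proj}_I:\{-1,1\}^m\to\{-1,1\}^{|I|}$ keeps the coordinates indexed by $I$. Reduction: for partitions $\mu$ of length $m$ and $\lambda$ of length $k\le m$, $\mu\Rightarrow\lambda$ iff there exist $I\subset\{1,\dots,m\}$, $|I|=k$, and $v\in V_\lambda$ with $\mathrm{Proj}_I(\mu^{\perp B})\subset v^{\perp B}$. $\mu$ strictly reduces to $\lambda$ iff $\mu\Rightarrow\lambda$ and not $\lambda\Rightarrow\mu$. Partitions $\lambda,\mu$ of the same length are equivalent iff there is $w\in V_\mu$ with $\lambda^{\perp B}=w^{\perp B}$. A partition $\lambda$ is novel iff $\lambda^{\perp B}\neq\emptyset$, $\lambda$ strictly reduces to no partition, and $\lambda$ is lexicographically smallest among partitions equivalent to it. *)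

(* Defs.v *)
From HB Require Import structures.
From mathcomp Require Import all_boot all_order all_algebra.
Set Implicit Arguments. Unset Strict Implicit. Unset Printing Implicit Defensive.
Import GRing.Theory Num.Theory.

Definition is_partition (l : seq nat) : bool :=
  [&& 0 < size l, sorted geq l & all (fun a => 0 < a) l].

Definition is_sign (z : int) : bool := (z == 1%R) || (z == (-1)%R).

Definition dotZ (v x : seq int) : int := (\sum_(p <- zip v x) p.1 * p.2)%R.

Definition perpB (v x : seq int) : bool :=
  [&& size x == size v, all is_sign x & dotZ v x == 0%R].

Definition vecZ (l : seq nat) : seq int := map Posz l.

(* V_lambda : signed permutations of lambda with positive first coordinate *)
Definition inV (l : seq nat) (v : seq int) : bool :=
  perm_eq (map absz v) l && (0 < head 0%R v)%R.

(* Proj_I is encoded by a mask b : bitseq of size m with count b = |I|;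
   mask b x keeps the coordinates of x selected by b, in order. *)
Definition reduces (mu la : seq nat) : Prop :=
  size la <= size mu /\
  exists (b : bitseq) (v : seq int),
    [/\ size b = size mu, count id b = size la, inV la v &
        forall x, perpB (vecZ mu) x -> perpB v (mask b x)].

Definition strictly_reduces (mu la : seq nat) : Prop :=
  reduces mu la /\ ~ reduces la mu.

Definition equivalent (la mu : seq nat) : Prop :=
  size la = size mu /\
  exists w, inV mu w /\ forall x, perpB (vecZ la) x = perpB w x.

Fixpoint lex_le (s t : seq nat) : bool :=
  match s, t with
  | [::], _ => true
  | _ :: _, [::] => false
  | a :: s', b :: t' => (a < b) || ((a == b) && lex_le s' t')
  end.

Definition novel (la : seq nat) : Prop :=
  [/\ exists x, perpB (vecZ la) x,
      (forall mu, is_partition mu -> ~ strictly_reduces la mu) &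
      (forall mu, is_partition mu -> equivalent mu la -> lex_le la mu)].

(* Main.v *)
Require Import Defs.
From mathcomp Require Import all_boot all_order all_algebra.
From mathcomp Require Import zify ring.
From Stdlib Require Import Classical.
Import GRing.Theory Num.Theory.

Fixpoint dotF (v x : seq int) : int :=
  match v, x with p :: v', q :: x' => (p * q + dotF v' x')%R | _, _ => 0%R end.
Lemma dotZ_F v x : dotZ v x = dotF v x.
Proof. elim: v x => [|p v IH] [|q x]; rewrite /dotZ /= ?big_nil // big_cons -IH //. Qed.
Definition perpF (v x : seq int) : bool :=
  [&& size x == size v, all is_sign x & dotF v x == 0%R].
Lemma perpB_F v x : perpB v x = perpF v x.
Proof. by rewrite /perpB /perpF dotZ_F. Qed.

Lemma is_signP s : is_sign s -> s = 1%R \/ s = (-1)%R.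
Proof. by case/orP => /eqP ->; [left|right]. Qed.

Lemma perp5 v x : perpB v x -> size v = 5 ->
  exists s1 s2 s3 s4 s5, x = [:: s1; s2; s3; s4; s5] /\
   [/\ is_sign s1, is_sign s2, is_sign s3, is_sign s4 & is_sign s5].
Proof.
move=> /and3P [/eqP Hs Hsg _] Hv; rewrite Hv in Hs.
case: x Hs Hsg => [|s1 [|s2 [|s3 [|s4 [|s5 [|? ?]]]]]] //= _.
move=> /andP[h1 /andP[h2 /andP[h3 /andP[h4 /andP[h5 _]]]]].
by exists s1, s2, s3, s4, s5.
Qed.

Ltac destr_x x Hx :=
  let s1 := fresh "s" in let s2 := fresh "s" in let s3 := fresh "s" in
  let s4 := fresh "s" in let s5 := fresh "s" in
  let h1 := fresh "h" in let h2 := fresh "h" in let h3 := fresh "h" in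
  let h4 := fresh "h" in let h5 := fresh "h" in
  have [s1 [s2 [s3 [s4 [s5 [? [h1 h2 h3 h4 h5]]]]]]] := @perp5 _ _ Hx (erefl _); subst x;
  case/is_signP: h1 => ?; subst s1; case/is_signP: h2 => ?; subst s2;
  case/is_signP: h3 => ?; subst s3;
  case/is_signP: h4 => ?; subst s4; case/is_signP: h5 => ?; subst s5.

Lemma part5 la : is_partition la -> size la = 5 -> exists a b c d e,
  la = [:: a; b; c; d; e] /\ [/\ b <= a, c <= b, d <= c, e <= d & 0 < e]%N.
Proof.
case/and3P => _ Hs Hp; case: la Hs Hp => [|a [|b [|c [|d [|e [|? ?]]]]]] //= Hs Hp _.
exists a, b, c, d, e; split => //. move: Hs Hp; rewrite /geq /= => /and5P[? ? ? ? _] /and5P[? ? ? ? /andP[? _]]; by split.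
Qed.

Lemma pair_wit la b v : size la = 5 -> size b = 5 -> count id b = 2 ->
  inV [:: 1; 1]%N v -> ~ strictly_reduces la [:: 1; 1]%N ->
  exists x, perpB (vecZ la) x /\ ~~ perpB v (mask b x).
Proof.
move=> Hl Hb Hc Hv Hn.
case: (classic (exists x, perpB (vecZ la) x /\ ~~ perpB v (mask b x))) => // Hno.
exfalso; apply: Hn; split.
  split; first by rewrite Hl.
  exists b, v; split; rewrite ?Hb ?Hc ?Hl // => x Hx.
  case: (boolP (perpB v (mask b x))) => // Hn; exfalso; apply: Hno; by exists x.
by case; rewrite Hl.
Qed.

Lemma final t : (0 < t)%N ->
  (forall mu, is_partition mu -> equivalent mu [:: 2 * t; t; t; t; t]%N ->
     lex_le [:: 2 * t; t; t; t; t]%N mu) ->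
  [:: 2 * t; t; t; t; t]%N = [:: 2; 1; 1; 1; 1]%N.
Proof.
move=> Ht H.
have: lex_le [:: 2 * t; t; t; t; t]%N [:: 2; 1; 1; 1; 1]%N.
  apply: H; first by [].
  split => //; exists (vecZ [:: 2 * t; t; t; t; t]%N); split.
    by rewrite /inV /= perm_refl /=; lia.
  move=> x; rewrite !perpB_F /perpF.
  case: x => [|s1 [|s2 [|s3 [|s4 [|s5 [|? ?]]]]]] //=; congr (_ && _).
  have -> : (Posz (2 * t)%N * s1 + (Posz t * s2 + (Posz t * s3 + (Posz t * s4 + (Posz t * s5 + 0)))))%R
    = (Posz t * (2%:Z * s1 + (1%:Z * s2 + (1%:Z * s3 + (1%:Z * s4 + (1%:Z * s5 + 0))))))%R.
    by rewrite PoszM; ring.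
  rewrite mulf_eq0; have -> : (Posz t == 0%R) = false by lia.
  by [].
move=> /= HH; have -> : t = 1%N by lia.
by [].
Qed.

Ltac getE H :=
  let E := fresh "E" in
  move: H; rewrite perpB_F => /and3P[_ _ /eqP]; rewrite /= => E.

Lemma forward la : is_partition la -> size la = 5 -> novel la ->
  la = [:: 2; 1; 1; 1; 1]%N.
Proof.
move=> Hp Hs [_ H2 H3].
have [a [b [c [d [e [Hla [h1 h2 h3 h4 h5]]]]]]] := part5 la Hp Hs.
have Hn : ~ strictly_reduces la [:: 1; 1]%N by apply: H2.
have [x1 [Hx1 Hn1]] := @pair_wit la [:: true; true; false; false; false] [:: 1; 1]%R
   Hs erefl erefl ltac:(by vm_compute) Hn.
have [x2 [Hx2 Hn2]] := @pair_wit la [:: true; false; false; false; true] [:: 1; 1]%R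
   Hs erefl erefl ltac:(by vm_compute) Hn.
have [x3 [Hx3 Hn3]] := @pair_wit la [:: false; false; false; true; true] [:: 1; -1]%R
   Hs erefl erefl ltac:(by vm_compute) Hn.
rewrite Hla in Hx1 Hx2 Hx3 H3 *.
destr_x x1 Hx1; rewrite perpB_F in Hn1; vm_compute in Hn1; try discriminate;
  getE Hx1; try (exfalso; lia).
all: destr_x x2 Hx2; rewrite perpB_F in Hn2; vm_compute in Hn2; try discriminate;
  getE Hx2; try (exfalso; lia).
all: destr_x x3 Hx3; rewrite perpB_F in Hn3; vm_compute in Hn3; try discriminate;
  getE Hx3; try (exfalso; lia).
all: have ? : b = e by lia.
all: have ? : c = e by lia.
all: have ? : d = e by lia.
all: have ? : a = (2 * e)%N by lia.
all: subst a b c d; exact: final.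
Qed.

Fixpoint signsN n : seq (seq int) :=
  if n is n'.+1 then flatten [seq [:: 1%R :: x; (-1)%R :: x] | x <- signsN n']
  else [:: [::]].
Definition D5 : seq int := [:: 1; -1; 2; -2]%R.

Lemma finW : all (fun a => all (fun b => all (fun c => all (fun d => all (fun e =>
  inV [:: 2; 1; 1; 1; 1]%N [:: a; b; c; d; e] ==> has (perpF [:: a; b; c; d; e]) (signsN 5))
  D5) D5) D5) D5) D5.
Proof. by vm_compute. Qed.

Lemma wit_V w : inV [:: 2; 1; 1; 1; 1]%N w -> exists x, perpB w x.
Proof.
move=> Hw; case/andP: (Hw) => Hp _.
have Hsz : size w = 5 by rewrite -(size_map absz) (perm_size Hp).
have Hm : forall z, z \in w -> z \in D5.
  move=> z Hz; have : (absz z \in [:: 2; 1; 1; 1; 1]%N) by rewrite -(perm_mem Hp); apply: map_f.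
  by case: z {Hz} => [[|[|[|k]]]|[|[|k]]]; vm_compute.
clear Hp; case: w Hw Hsz Hm => [|w1 [|w2 [|w3 [|w4 [|w5 [|? ?]]]]]] //= Hw _ Hm.
have m1 : w1 \in D5 by apply: Hm; rewrite !inE eqxx.
have m2 : w2 \in D5 by apply: Hm; rewrite !inE eqxx ?orbT.
have m3 : w3 \in D5 by apply: Hm; rewrite !inE eqxx ?orbT.
have m4 : w4 \in D5 by apply: Hm; rewrite !inE eqxx ?orbT.
have m5 : w5 \in D5 by apply: Hm; rewrite !inE eqxx ?orbT.
move: finW => /allP/(_ _ m1)/allP/(_ _ m2)/allP/(_ _ m3)/allP/(_ _ m4)/allP/(_ _ m5).
rewrite Hw implyTb => /hasP [x _ Hx]; exists x; by rewrite perpB_F.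
Qed.

Lemma lex_ok mu : is_partition mu -> equivalent mu [:: 2; 1; 1; 1; 1]%N ->
  lex_le [:: 2; 1; 1; 1; 1]%N mu.
Proof.
move=> Hmu [Hs [w [Hw Heq]]].
have [m1 [m2 [m3 [m4 [m5 [Em [h1 h2 h3 h4 h5]]]]]]] := part5 mu Hmu Hs.
subst mu.
case: (leqP 2 m1) => hm; first by rewrite /=; lia.
have ? : m1 = 1%N by lia.
have ? : m2 = 1%N by lia.
have ? : m3 = 1%N by lia.
have ? : m4 = 1%N by lia.
have ? : m5 = 1%N by lia.
subst.
have [x Hx] := wit_V w Hw; rewrite -Heq in Hx.
destr_x x Hx; move: Hx; rewrite perpB_F; vm_compute; move=> H; discriminate.
Qed.

Lemma red_ok mu : is_partition mu -> reduces [:: 2; 1; 1; 1; 1]%N mu ->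
  reduces mu [:: 2; 1; 1; 1; 1]%N.
Proof.
move=> Hmu [Hs [b [v [Hb Hc Hinv H]]]].
have Hsv : size v = count id b.
  by case/andP: Hinv => /perm_size; rewrite size_map Hc.
have Hh : (0 < head 0 v)%R by case/andP: Hinv.
have H1 := H [:: 1; 1; -1; -1; -1]%R ltac:(by rewrite perpB_F; vm_compute).
have H2 := H [:: 1; -1; 1; -1; -1]%R ltac:(by rewrite perpB_F; vm_compute).
have H3 := H [:: 1; -1; -1; 1; -1]%R ltac:(by rewrite perpB_F; vm_compute).
have H4 := H [:: 1; -1; -1; -1; 1]%R ltac:(by rewrite perpB_F; vm_compute).
clear H.
case: b Hb Hc Hsv H1 H2 H3 H4 => [|b1 [|b2 [|b3 [|b4 [|b5 [|? ?]]]]]] // _.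
case: b1; case: b2; case: b3; case: b4; case: b5 => Hc Hsv H1 H2 H3 H4.
all: case: v Hh Hinv Hsv H1 H2 H3 H4 => [|v1 [|v2 [|v3 [|v4 [|v5 [|v6 v]]]]]] Hh Hinv Hsv H1 H2 H3 H4;
  try discriminate.
all: try (exfalso; move: Hh => /= Hh; lia).
all: getE H1; getE H2; getE H3; getE H4; move: Hh => /= Hh; try (exfalso; lia).
have ? : v2 = v5 by lia.
have ? : v3 = v5 by lia.
have ? : v4 = v5 by lia.
have ? : v1 = (2 * v5)%R by lia.
subst v1 v2 v3 v4.
move: Hh Hinv; clear -Hmu; case: v5 => [n|n] Hh Hinv; last by exfalso; lia.
have Hn : (0 < n)%N by lia.
move: Hinv; rewrite /inV => /andP [Hpe _].
have Em : [:: (2 * n)%N; n; n; n; n] = mu.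
  apply: (@sorted_eq _ geq).
  - by move=> y x z /= ? ?; lia.
  - by move=> x y /andP [? ?]; apply/eqP; rewrite eqn_leq; apply/andP; split.
  - by rewrite /=; lia.
  - by case/and3P: Hmu.
  - move: Hpe; rewrite /=.
    move=> HH; exact HH.
subst mu.
split; first by [].
exists [:: true; true; true; true; true], (vecZ [:: 2; 1; 1; 1; 1]%N).
split => //; try by vm_compute.
move=> x Hx.
destr_x x Hx; getE Hx; rewrite perpB_F; vm_compute; try reflexivity; exfalso; lia.
Qed.

Theorem mainTheorem9 (la : seq nat) :
  is_partition la -> size la = 5 -> (novel la <-> la = [:: 2; 1; 1; 1; 1]).
Proof.
move=> Hp Hs; split; first exact: forward.
move=> ->; split.
- by exists [:: 1; 1; -1; -1; -1]%R; rewrite perpB_F; vm_compute.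
- by move=> mu Hmu [Hr Hn]; apply: Hn; apply: red_ok.
- exact: lex_ok.
Qed.
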